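(* Let $\sigma\colon\Gamma\to2^V$ be a quasi-geometric homology triangulation of a simplex, $E$ a face of $\Gamma$ with $|V|-|\sigma(E)|=1$, and $L(\Gamma,E)$ the local face module with respect to a special l.s.o.p. Let $\Delta\subset\mathrm{lk}_\Gamma(E)$ be a subcomplex. Then $$\dim_k\big(L(\Gamma,E)|_\Delta\big)_1\ge|\{v\text{ a vertex of }\Delta:\{v\}\sqcup E\text{ interior}\}|-1.$$
   Context: Fix an infinite field $k$; homology is with coefficients in $k$. A $d$-dimensional simplicial complex $\Gamma$ with trivial reduced homology is a homology ball of dimension $d$ if there is a subcomplex $\partial\Gamma$ such that $\partial\Gamma$ is a homology sphere of dimension $d-1$, $\mathrm{lk}_\Gamma(F)$ is a homology sphere of dimension $d-|F|$ for $F\notin\partial\Gamma$, and $\mathrm{lk}_\Gamma(F)$ is a homology ball of dimension $d-|F|$ for nonempty $F\in\partial\Gamma$; its interior faces are those not in $\partial\Gamma$. A homology triangulation of $2^V$ is a finite simplicial complex $\Gamma$ with $\sigma\colon\Gamma\to2^V$ such that for every nonempty $U\subset V$, $\Gamma_U:=\sigma^{-1}(2^U)$ is a homology ball of dimension $|U|-1$ whose interior faces are exactly $\sigma^{-1}(U)$. $\sigma(F)$ is the carrier; $\sigma(w)=\sigma(\{w\})$. It is quasi-geometric if there is no face $F$ and $U\subset V$ with $\dim\Gamma_U<\dim F$ and $\sigma(w)\subset U$ for all vertices $w\in F$. A face $G$ is interior if $\sigma(G)=V$. $k[\Delta]$ is the face ring (variables $x_w$, $x^F=\prod_{w\in F}x_w$),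 graded by degree; the restriction map $k[\mathrm{lk}_\Gamma(E)]\to k[\Delta]$ sends $x^G$ to $x^G$ if $G\in\Delta$ and $0$ otherwise, and $M|_\Delta:=M\otimes_{k[\mathrm{lk}_\Gamma(E)]}k[\Delta]$. An l.s.o.p. for a finitely generated graded $k$-algebra of Krull dimension $d$ is a sequence of $d$ degree-one elements with finite-dimensional quotient; an l.s.o.p. $\theta_1,\ldots,\theta_d$ of $k[\mathrm{lk}_\Gamma(E)]$ ($d=|V|-|E|$) is special if for each $v\in V\smallsetminus\sigma(E)$ there is an element $\theta_v$ of it supported on vertices $w$ with $v\in\sigma(w)$, distinct for distinct $v$. $L(\Gamma,E)$ is the image of $(x^G:G\in\mathrm{lk}_\Gamma(E),\ G\sqcup E\text{ interior})$ in $k[\mathrm{lk}_\Gamma(E)]/(\theta_1,\ldots,\theta_d)$. *)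

(* Defs.v *)
From mathcomp Require Import all_boot all_order all_algebra.
From mathcomp Require Import mpoly.

Set Implicit Arguments.
Unset Strict Implicit.
Unset Printing Implicit Defensive.

Import GRing.Theory.
Local Open Scope ring_scope.

Section Complexes.
Variable N : nat.
Notation face := {set 'I_N}.
Notation cplx := {set {set 'I_N}}.

Definition is_complex (K : cplx) : Prop :=
  forall F G : face, F \in K -> G \subset F -> G \in K.

Definition link (K : cplx) (F : face) : cplx :=
  [set G in K | [disjoint G & F] && (G :|: F \in K)].

(* faces with exactly j elements (i.e. of dimension j-1) *)
Definition layer (K : cplx) (j : nat) : cplx := [set F in K | #|F| == j].

Section Hom.
Variable k : fieldType.

(* simplicial boundary map from faces of size j.+1 to faces of size j,
   with respect to the order of 'I_N; row-vector convention. *)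
Definition bdry (K : cplx) (j : nat) : 'M[k]_(#|layer K j.+1|, #|layer K j|) :=
  \matrix_(a < #|layer K j.+1|, b < #|layer K j|)
    (let F : {set 'I_N} := enum_val a in let G : {set 'I_N} := enum_val b in
     if G \subset F then
       (-1) ^+ #|[set u in G | [forall w in F :\: G, (u < w)%N]]|
     else 0).

(* dimension of the reduced simplicial homology group H~_{j-1}(K; k) *)
Definition rbetti (K : cplx) (j : nat) : nat :=
  (if j is j'.+1 then \rank (kermx (bdry K j')) else #|layer K 0|)
  - \rank (bdry K j).

Definition acyclic (K : cplx) : Prop := forall j, rbetti K j = 0%N.

Definition hsphere (d : int) (K : cplx) : Prop :=
  [/\ is_complex K, set0 \in K &
    forall F, F \in K -> forall j : nat,
      rbetti (link K F) j = (if (j%:Z - 1 == d - #|F|%:Z)%R then 1%N else 0%N)].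

(* hball_f fuel m K B : K is a homology ball of dimension m-1 with boundary B.
   The fuel only serves to make the recursion structural; see hball_bd. *)
Fixpoint hball_f (fuel m : nat) (K B : cplx) : Prop :=
  match fuel with
  | 0 => False
  | f.+1 =>
    match m with
    | 0 => False
    | m'.+1 =>
      [/\ is_complex K /\ set0 \in K,
          (exists2 F, F \in K & #|F| = m) /\ (forall F, F \in K -> #|F| <= m)%N,
          acyclic K /\ B \subset K /\ hsphere (m%:Z - 2) B,
          (forall F, F \in K -> F \notin B ->
              hsphere (m%:Z - 1 - #|F|%:Z) (link K F)) &
          (forall F, F \in B -> F != set0 ->
              exists B', hball_f f (m - #|F|)%N (link K F) B')]
    end
  end.

Definition hball_bd (m : nat) (K B : cplx) : Prop := hball_f m m K B.

End Hom.
End Complexes.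

Section Triang.
Variables (k : fieldType) (N : nat) (V : finType).
Variable Gam : {set {set 'I_N}}.
Variable sigma : {set 'I_N} -> {set V}.

(* Gamma_U = sigma^{-1}(2^U) *)
Definition restrU (U : {set V}) : {set {set 'I_N}} :=
  [set F in Gam | sigma F \subset U].

Definition homology_triangulation : Prop :=
  is_complex Gam /\
  forall U : {set V}, U != set0 ->
    hball_bd k #|U| (restrU U) [set F in restrU U | sigma F != U].

Definition quasi_geometric : Prop :=
  ~ exists (F : {set 'I_N}) (U : {set V}),
      [/\ F \in Gam,
          (forall G, G \in restrU U -> #|G| < #|F|)%N &
          forall w, w \in F -> sigma [set w] \subset U].

Definition interior (G : {set 'I_N}) : bool := sigma G == setT.
End Triang.

Section Rings.
Variables (k : fieldType) (N : nat).
Notation S := {mpoly k[N]}.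

Definition monom (F : {set 'I_N}) : S := \prod_(i in F) 'X_i.

Definition ideal_gen (G : S -> Prop) : S -> Prop :=
  fun p => exists r : seq (S * S),
    (forall q, q \in r -> G q.2) /\ p = \sum_(q <- r) q.1 * q.2.

Definition gunion (G1 G2 : S -> Prop) : S -> Prop := fun p => G1 p \/ G2 p.

Definition gprod (I J : S -> Prop) : S -> Prop :=
  fun p => exists a b, [/\ I a, J b & p = a * b].

(* generators of the Stanley-Reisner ideal: k[K] = S / ideal_gen (sr_gens K) *)
Definition sr_gens (K : {set {set 'I_N}}) : S -> Prop :=
  fun p => exists F, F \notin K /\ p = monom F.

Definition lin_form (c : 'I_N -> k) : S := \sum_(w < N) c w *: 'X_w.

Definition deg1 (p : S) : Prop := exists c, p = lin_form c.

(* S / I is a finite-dimensional k-vector space *)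
Definition findim_quot (I : S -> Prop) : Prop :=
  exists s : seq S, forall p, exists a : nat -> k,
    I (p - \sum_(i < size s) a i *: s`_i).

(* dim_k (M/N)_1 >= c, for homogeneous ideals N <= M of S *)
Definition dim1_quot_ge (M Nn : S -> Prop) (c : nat) : Prop :=
  exists s : 'I_c -> S,
    (forall i, M (s i) /\ deg1 (s i)) /\
    forall a : 'I_c -> k, Nn (\sum_i a i *: s i) -> forall i, a i = 0.
End Rings.

Section LocalFaceModule.
Variables (k : fieldType) (N : nat) (V : finType).
Variable Gam : {set {set 'I_N}}.
Variable sigma : {set 'I_N} -> {set V}.
Variable E : {set 'I_N}.
Variable d : nat.
(* theta_i = \sum_w c i w x_w, i < d : the (representatives of the) l.s.o.p. *)
Variable c : 'I_d -> 'I_N -> k.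

Definition theta_gens : {mpoly k[N]} -> Prop := fun p => exists i, p = lin_form (c i).

Definition int_gens : {mpoly k[N]} -> Prop :=
  fun p => exists G, [/\ G \in link Gam E, interior sigma (G :|: E) & p = @monom k N G].

(* theta is an l.s.o.p. of k[lk E] (of length d): k[lk E]/(theta) is finite-dimensional *)
Definition is_lsop : Prop :=
  findim_quot (ideal_gen (gunion (@sr_gens k N (link Gam E)) theta_gens)).

Definition is_special : Prop :=
  exists f : V -> 'I_d,
    {in ~: sigma E &, injective f} /\
    forall v, v \notin sigma E -> forall w, c (f v) w != 0 -> v \in sigma [set w].

(* Lift to S of L(Gam,E) \subset k[lk E]/(theta):  L = Lnum / (I_lk + (theta)). *)
Definition Lnum : {mpoly k[N]} -> Prop :=
  ideal_gen (gunion (@sr_gens k N (link Gam E)) (gunion theta_gens int_gens)).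

(* L|_Delta = L (x)_{k[lk E]} k[Delta] = L / I_Delta L = Lnum / Lden_Delta *)
Definition Lden (Delta : {set {set 'I_N}}) : {mpoly k[N]} -> Prop :=
  ideal_gen (gunion (@sr_gens k N (link Gam E))
            (gunion theta_gens (gprod (ideal_gen (@sr_gens k N Delta)) Lnum))).
End LocalFaceModule.

(* Main.v *)
Require Import Defs.
From mathcomp Require Import all_boot all_order all_algebra.
From mathcomp Require Import mpoly.
From mathcomp Require Import zify ring.
Set Implicit Arguments.
Unset Strict Implicit.
Import GRing.Theory.
Local Open Scope ring_scope.
Section Ev.
Variables (k : fieldType) (N : nat).
Definition ev (p : 'I_N -> k) (f : {mpoly k[N]}) : {poly k} :=
  mmap (@polyC k) (fun w => (p w)%:P * 'X) f.
Lemma evM p : {morph ev p : x y / x * y}.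
Proof. move=> x y; exact: rmorphM. Qed.
Lemma evD p : {morph ev p : x y / x + y}.
Proof. move=> x y; exact: rmorphD. Qed.
Lemma evB p : {morph ev p : x y / x - y}.
Proof. move=> x y; exact: rmorphB. Qed.
Lemma evXn p f n : ev p (f ^+ n) = ev p f ^+ n.
Proof. exact: rmorphXn. Qed.
Lemma evX p w : ev p 'X_w = (p w)%:P * 'X.
Proof. by rewrite /ev mmapX mmap1U. Qed.
Lemma evZ p a f : ev p (a *: f) = a%:P * ev p f.
Proof. by rewrite /ev mmapZ. Qed.
Lemma ev_sum p I (r : seq I) (P : pred I) F : ev p (\sum_(i <- r | P i) F i) = \sum_(i <- r | P i) ev p (F i).
Proof. exact: rmorph_sum. Qed.
Lemma ev_prod p I (r : seq I) (P : pred I) F : ev p (\prod_(i <- r | P i) F i) = \prod_(i <- r | P i) ev p (F i).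
Proof. exact: rmorph_prod. Qed.
Lemma ev_monom p (F : {set 'I_N}) :
  ev p (monom k F) = (\prod_(i in F) p i)%:P * 'X ^+ #|F|.
Proof.
rewrite /monom ev_prod.
under eq_bigr => i _ do rewrite evX.
by rewrite big_split /= -rmorph_prod prodr_const.
Qed.
Lemma ev_lin p a : ev p (lin_form a) = (\sum_w a w * p w)%:P * 'X.
Proof.
rewrite /lin_form ev_sum rmorph_sum mulr_suml; apply: eq_bigr => w _.
by rewrite evZ evX rmorphM mulrA.
Qed.
Lemma ev_ideal p (G : {mpoly k[N]} -> Prop) (Q : {poly k} -> Prop) :
  Q 0 -> (forall a b, Q a -> Q b -> Q (a + b)) -> (forall x a, Q a -> Q (x * a)) ->
  (forall g, G g -> Q (ev p g)) -> forall f, ideal_gen G f -> Q (ev p f).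
Proof.
move=> Q0 QD QM HG f [r [Hr ->]]; rewrite ev_sum.
elim: r Hr => [|q r IH] Hr; first by rewrite big_nil.
rewrite big_cons; apply: QD; last by apply: IH => x xr; apply: Hr; rewrite inE xr orbT.
by rewrite evM; apply: QM; apply: HG; apply: Hr; rewrite inE eqxx.
Qed.
End Ev.
Section Lsop.
Variables (k : fieldType) (N : nat).
Lemma link_complex (Gam : {set {set 'I_N}}) E : is_complex Gam -> is_complex (link Gam E).
Proof.
move=> hG F G; rewrite !inE => /and3P [FG dFE FEG] GF.
rewrite (hG F G FG GF) (hG _ _ FEG (setSU E GF)) andbT.
by rewrite disjoints_subset (subset_trans GF) // -disjoints_subset.
Qed.

Lemma sum_delta (f : 'I_N -> k) v : \sum_w f w * (w == v)%:R = f v.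
Proof.
rewrite (bigD1 v) //= eqxx mulr1 big1 ?addr0 // => w /negbTE ->; exact: mulr0.
Qed.

Lemma lsop_rank (Gam : {set {set 'I_N}}) E d (c : 'I_d -> 'I_N -> k)
  (hG : is_complex Gam) (hl : is_lsop Gam E c) (G : {set 'I_N}) (hGl : G \in link Gam E) :
  row_free (\matrix_(j < #|G|, i < d) c i (enum_val j)).
Proof.
set M := \matrix_(j < #|G|, i < d) c i (enum_val j).
apply/negPn/negP => nfree.
have : kermx M != 0.
  rewrite -mxrank_eq0 mxrank_ker; move: nfree; rewrite /row_free.
  have := rank_leq_row M; lia.
case/rowV0Pn => u /sub_kermxP uM unz.
have [j0 uj0] : exists j, u 0 j != 0 by apply/rV0Pn.
pose q (w : 'I_N) := \sum_j u 0 j * (enum_val j == w)%:R.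
have qout w : w \notin G -> q w = 0.
  move=> wG; rewrite /q big1 // => j _.
  case: eqP => [ej|]; last by rewrite mulr0.
  by move: wG; rewrite -ej enum_valP.
have qin j : q (enum_val j) = u 0 j.
  rewrite /q (bigD1 j) //= eqxx mulr1 big1 ?addr0 // => j' /negbTE nj.
  by rewrite (inj_eq enum_val_inj) nj mulr0.
have qtheta i : \sum_w c i w * q w = 0.
  have := congr1 (fun m : 'rV[k]_d => m 0 i) uM; rewrite /= !mxE => H.
  rewrite -[RHS]H.
  rewrite /q; under eq_bigr => w _ do rewrite mulr_sumr.
  rewrite exchange_big /=; apply: eq_bigr => j _.
  under eq_bigr => w _ do rewrite mulrCA.
  rewrite -mulr_sumr; under eq_bigr => w _ do rewrite eq_sym.
  by rewrite sum_delta mxE.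
have hid : forall f, ideal_gen (gunion (@sr_gens k N (link Gam E)) (theta_gens c)) f -> ev q f = 0.
  apply: (ev_ideal (p:=q) (Q := fun P => P = 0)) => //; first by move=> a b -> ->; rewrite addr0.
    by move=> x a ->; rewrite mulr0.
  move=> g [[H [HnL ->]]|[i ->]]; last by rewrite ev_lin qtheta mul0r.
  rewrite ev_monom.
  have [HG|] := boolP (H \subset G).
    by move: HnL; rewrite (link_complex hG hGl HG).
  case/subsetPn => i iH iG.
  by rewrite (bigD1 i) //= qout // mul0r mul0r.
case: hl => s hs.
pose n := (\max_(i < size s) size (ev q s`_i))%N.
have [a ha] := hs ('X_(enum_val j0) ^+ n).
move: (hid _ ha); rewrite evB /= => /eqP; rewrite subr_eq0 => /eqP.
move/(congr1 (fun P : {poly k} => P`_n)).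
rewrite evXn evX exprMn -rmorphXn coefCM coefXn eqxx mulr1 qin.
rewrite ev_sum coef_sum big1 => [/eqP|i _].
  by rewrite expf_eq0 (negbTE uj0) andbF.
rewrite evZ coefCM nth_default ?mulr0 //.
rewrite /n; exact: (@leq_bigmax _ (fun i : 'I_(size s) => size (ev q s`_i)) i).
Qed.
End Lsop.
Section Facet.
Variables (k : fieldType) (N : nat) (V : finType).
Lemma rbetti_layer (K : {set {set 'I_N}}) j : (0 < rbetti k K j)%N -> exists F, F \in layer K j.
Proof.
rewrite /rbetti; case: j => [|j] H.
  have : (0 < #|layer K 0|)%N by move: H; lia.
  by rewrite card_gt0 => /set0Pn.
have : (0 < #|layer K j.+1|)%N.
  have := rank_leq_row (kermx (bdry k K j)); move: H; lia.
by rewrite card_gt0 => /set0Pn.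
Qed.

Lemma bdry_facet (Gam : {set {set 'I_N}}) (sigma : {set 'I_N} -> {set V})
  (htri : homology_triangulation k Gam sigma) E (hE : E \in Gam)
  (hU : sigma E != set0) (hT : sigma E != setT) :
  exists G, [/\ G \in link Gam E, #|G| = (#|sigma E| - #|E|)%N &
     forall w, w \in G -> ~~ interior sigma ([set w] :|: E)].
Proof.
case: htri => hG /(_ _ hU); rewrite /hball_bd.
set U := sigma E; set K := restrU Gam sigma U.
case Em: #|U| => [|m'].
  by move: hU; rewrite -card_gt0 -/U Em.
move=> /=.
case=> [[Kc K0] [_ Ksz] _ Hint _].
have EK : E \in K by rewrite inE hE subxx.
have EB : E \notin [set F in K | sigma F != U] by rewrite inE EK eqxx.
have := Hint E EK EB; case=> _ l0 Hs.
have leE : (#|E| <= m'.+1)%N.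
  exact: Ksz.
have := Hs set0 l0 (m'.+1 - #|E|)%N.
rewrite cards0 ifT; last first.
  apply/eqP; rewrite subr0 -subzn // addrAC //.
move=> H1.
have [G] : exists F, F \in layer (link (link K E) set0) (m'.+1 - #|E|)%N.
  by apply: rbetti_layer; rewrite H1.
rewrite !inE setU0 => /andP [/and3P [/and3P [GK dGE GEK] _ _] /eqP cG].
exists G; split.
- move: GK GEK; rewrite !inE dGE => /andP[-> _] /andP[-> _] //.
- by rewrite cG.
move=> w wG; apply/negP => /eqP hint.
have : [set w] :|: E \in K.
  apply: (Kc (G :|: E)); first by rewrite inE.
  by apply: setSU; rewrite sub1set.
rewrite inE hint => /andP [_ sT].
by move: hT; rewrite -/U eqEsubset sT subsetT.
Qed.
End Facet.
Section Den.
Variables (k : fieldType) (N : nat) (V : finType).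
Variables (Gam : {set {set 'I_N}}) (sigma : {set 'I_N} -> {set V}) (E : {set 'I_N}).
Variables (d : nat) (c : 'I_d -> 'I_N -> k) (Delta : {set {set 'I_N}}).
Hypothesis l0 : set0 \in link Gam E.
Hypothesis D0 : set0 \in Delta.
Hypothesis hT : sigma E != setT.
Variable p : 'I_N -> k.
Hypothesis P1 : forall w, [set w] \notin link Gam E -> p w = 0.
Hypothesis P2 : forall i, \sum_w c i w * p w = 0.

Lemma coef1M (a b : {poly k}) : (a * b)`_1 = a`_0 * b`_1 + a`_1 * b`_0.
Proof. by rewrite coefM big_ord_recr big_ord_recr big_ord0 /= add0r. Qed.

Lemma monom0 (H : {set 'I_N}) : H != set0 -> (ev p (monom k H))`_0 = 0.
Proof.
move=> Hn; rewrite ev_monom coefCM coefXn eq_sym eqn0Ngt card_gt0 Hn mulr0 //.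
Qed.

Let Q0 (P : {poly k}) := P`_0 = 0.
Lemma Q0D a b : Q0 a -> Q0 b -> Q0 (a + b).
Proof. by rewrite /Q0 coefD => -> ->; rewrite addr0. Qed.
Lemma Q0M x a : Q0 a -> Q0 (x * a).
Proof. by rewrite /Q0 coef0M => ->; rewrite mulr0. Qed.
Lemma Q00 : Q0 0. Proof. by rewrite /Q0 coef0. Qed.

Lemma Lnum0 f : Lnum Gam sigma E c f -> (ev p f)`_0 = 0.
Proof.
apply: (ev_ideal (p:=p) (Q:=Q0)); [exact: Q00|exact: Q0D|exact: Q0M|].
move=> g [[H [HnL ->]]|[[i ->]|[G [_ hint ->]]]]; rewrite /Q0.
- by apply: monom0; apply: contraNneq HnL => ->.
- by rewrite ev_lin coefCM coefX mulr0.
- apply: monom0; apply: contraNneq hT => G0.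
  by move: hint; rewrite /interior G0 set0U.
Qed.

Lemma Delta0 f : ideal_gen (@sr_gens k N Delta) f -> (ev p f)`_0 = 0.
Proof.
apply: (ev_ideal (p:=p) (Q:=Q0)); [exact: Q00|exact: Q0D|exact: Q0M|].
move=> g [H [HnD ->]]; rewrite /Q0.
by apply: monom0; apply: contraNneq HnD => ->.
Qed.

Lemma Lden1 f : Lden Gam sigma E c Delta f -> (ev p f)`_1 = 0.
Proof.
move=> hf.
suff : (ev p f)`_0 = 0 /\ (ev p f)`_1 = 0 by case.
move: f hf; apply: (ev_ideal (p:=p) (Q:= fun P => P`_0 = 0 /\ P`_1 = 0)).
- by rewrite !coef0.
- by move=> a b [a0 a1] [b0 b1]; rewrite !coefD a0 a1 b0 b1 addr0.
- by move=> x a [a0 a1]; rewrite coef0M coef1M a0 a1 !mulr0 addr0.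
move=> g [[H [HnL ->]]|[[i ->]|[a [b [ha hb ->]]]]].
- split; first by apply: monom0; apply: contraNneq HnL => ->.
  rewrite ev_monom coefCM coefXn.
  have [H1|] := eqVneq #|H| 1%N; last by rewrite mulr0.
  have [w Hw] : exists w, H = [set w] by apply/cards1P; rewrite H1.
  by rewrite Hw big_set1 P1 ?mul0r // -Hw.
- by rewrite ev_lin coefCM coefCM coefX coefX P2 !mulr0 mul0r.
- rewrite evM coef0M coef1M (Delta0 ha) (Lnum0 hb); split; first by rewrite mul0r.
  by rewrite mul0r mulr0 addr0.
Qed.
End Den.
Section PConstr.
Variables (k : fieldType) (N : nat).
Lemma sum_enum (G : {set 'I_N}) (x : 'I_#|G| -> k) (f : 'I_N -> k) :
  \sum_w f w * (\sum_j x j * (enum_val j == w)%:R) = \sum_j x j * f (enum_val j).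
Proof.
under eq_bigr => w _ do rewrite mulr_sumr.
rewrite exchange_big /=; apply: eq_bigr => j _.
under eq_bigr => w _ do rewrite mulrCA.
rewrite -mulr_sumr; under eq_bigr => w _ do rewrite eq_sym.
by rewrite sum_delta.
Qed.

Lemma p_exists (Gam : {set {set 'I_N}}) E d (c : 'I_d -> 'I_N -> k)
  (hG : is_complex Gam) (G : {set 'I_N}) (hGl : G \in link Gam E)
  (vs v : 'I_N) (hvs : [set vs] \in link Gam E) (hv : [set v] \in link Gam E)
  (x1 : 'rV[k]_#|G|) (x2 : 'rV[k]_1)
  (heq : \row_i c i v = x1 *m (\matrix_(j < #|G|, i < d) c i (enum_val j)) + x2 *m \row_i c i vs) :
  exists p : 'I_N -> k, [/\ forall w, [set w] \notin link Gam E -> p w = 0,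
     forall i, \sum_w c i w * p w = 0 &
     forall u, u != vs -> u \notin G -> p u = (u == v)%:R].
Proof.
exists (fun w => (w == v)%:R - \sum_j x1 0 j * (enum_val j == w)%:R - x2 0 0 * (w == vs)%:R).
have hout w : w \notin G -> \sum_j x1 0 j * (enum_val j == w)%:R = 0.
  move=> wG; rewrite big1 // => j _; case: eqP => [ej|]; last by rewrite mulr0.
  by move: wG; rewrite -ej enum_valP.
split.
- move=> w wL.
  have wv : (w == v) = false by apply/negbTE; apply: contraNneq wL => ->.
  have wvs : (w == vs) = false by apply/negbTE; apply: contraNneq wL => ->.
  rewrite wv wvs mulr0 subr0 hout ?subrr //.
  apply: contraNN wL => wG; apply: (link_complex hG hGl); by rewrite sub1set.
- move=> i.
  have := congr1 (fun m : 'rV[k]_d => m 0 i) heq; rewrite /= !mxE big_ord1 !mxE => H.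
  under eq_bigr => w _ do rewrite !mulrBr.
  rewrite !sumrB sum_delta sum_enum.
  under [X in _ - X = _]eq_bigr => w _ do rewrite mulrCA.
  rewrite -mulr_sumr sum_delta H.
  under eq_bigr => j _ do rewrite mxE.
  rewrite (_ : (0 : 'I_1) = ord0) //; ring.
- move=> u uvs uG; rewrite hout // (negbTE uvs) mulr0 !subr0 //.
Qed.
End PConstr.
Theorem lemma5p6 (k : fieldType)
  (k_infinite : forall s : seq k, exists x : k, x \notin s)
  (N : nat) (V : finType)
  (Gam : {set {set 'I_N}}) (sigma : {set 'I_N} -> {set V})
  (htri : homology_triangulation k Gam sigma)
  (hqg : quasi_geometric Gam sigma)
  (E : {set 'I_N}) (hE : E \in Gam)
  (hEV : (#|V| - #|sigma E|)%N = 1%N)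
  (c : 'I_(#|V| - #|E|) -> 'I_N -> k)
  (hlsop : is_lsop Gam E c)
  (hspecial : is_special sigma E c)
  (Delta : {set {set 'I_N}})
  (hDelta : is_complex Delta) (hDsub : Delta \subset link Gam E) :
  dim1_quot_ge (Lnum Gam sigma E c) (Lden Gam sigma E c Delta)
    (#|[set v : 'I_N | ([set v] \in Delta) && interior sigma ([set v] :|: E)]| - 1)%N.
Proof.
set A := [set v : 'I_N | _].
have hGc := htri.1.
have [Asmall|Abig] := leqP #|A| 1.
  rewrite (_ : (#|A| - 1 = 0)%N); last by lia.
  exists (fun i => 0); split; first by move=> [m hm]; exfalso; move: hm; rewrite ltn0.
  by move=> a _ [m hm]; exfalso; move: hm; rewrite ltn0.
have [v0 v0A] : exists v0, v0 \in A by apply/set0Pn; rewrite -card_gt0; lia.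
have AL v : v \in A -> [set v] \in link Gam E.
  by rewrite inE => /andP [vD _]; apply: (subsetP hDsub).
have Aint v : v \in A -> interior sigma ([set v] :|: E).
  by rewrite inE => /andP [_ ->].
have D0 : set0 \in Delta.
  by move: v0A; rewrite inE => /andP [v0D _]; apply: (hDelta _ _ v0D (sub0set _)).
have hT : sigma E != setT.
  by apply/eqP => ET; move: hEV; rewrite ET cardsT subnn.
have l0 : set0 \in link Gam E.
  by rewrite inE (hGc _ _ hE (sub0set _)) set0U hE andbT disjoints_subset sub0set.
have [G [GL cG Gni]] : exists G, [/\ G \in link Gam E, #|G| = (#|V| - #|E| - 1)%N &
     forall w, w \in G -> ~~ interior sigma ([set w] :|: E)].
  have [U0|U0] := eqVneq (sigma E) set0.
    exists set0; split => //; last by move=> w; rewrite inE.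
    by move: hEV; rewrite U0 cards0 cards0; lia.
  have [G [GL cG Gni]] := bdry_facet htri hE U0 hT.
  exists G; split => //; rewrite cG.
  by have := subset_leq_card (subsetT (sigma E)); rewrite cardsT; lia.
set d := (#|V| - #|E|)%N in c hlsop hspecial cG *.
set M := \matrix_(j < #|G|, i < d) c i (enum_val j).
have rM : \rank M = #|G| := eqP (lsop_rank hGc hlsop GL).
pose zc u : 'rV[k]_d := \row_i c i u.
have [vs [vsA Hsub]] : exists vs, vs \in A /\ forall v, v \in A -> (zc v <= M + zc vs)%MS.
  case: (pickP (fun u => (u \in A) && ~~ (zc u <= M)%MS)) => [vs /andP [vsA nvs] | hnone].
  - exists vs; split => // v _; apply: submx_full.
    have : (M < M + zc vs)%MS.
      rewrite ltmxE addsmxSl /=; apply: contra nvs => h.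
      exact: submx_trans (addsmxSr M (zc vs)) h.
    rewrite ltmxErank => /andP [_]; rewrite /row_full.
    move=> hlt; have hle := rank_leq_col (M + zc vs)%MS.
    rewrite rM in hlt; apply/eqP; lia.
  - exists v0; split => // v vA.
    have := hnone v; rewrite vA /= => /negbFE h.
    exact: submx_trans h (addsmxSl _ _).
set B := A :\ vs.
have cB : #|B| = (#|A| - 1)%N by have := cardsD1 vs A; rewrite vsA -/B add1n; lia.
pose f (i : 'I_(#|A| - 1)) : 'I_N := enum_val (cast_ord (esym cB) i).
have fB i : f i \in B := enum_valP _.
have finj : injective f by move=> i j /enum_val_inj /cast_ord_inj.
exists (fun i => 'X_(f i)); split.
- move=> i; have := fB i; rewrite in_setD1 => /andP [_ fiA].
  split.
  + exists [:: (1, 'X_(f i))]; split; last by rewrite big_seq1 mul1r.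
    move=> q; rewrite inE => /eqP -> /=; right; right; exists [set f i]; split.
    * exact: AL.
    * exact: Aint.
    * by rewrite /monom big_set1.
  + exists (fun w => (w == f i)%:R); rewrite /lin_form.
    rewrite (bigD1 (f i)) //= eqxx scale1r big1 ?addr0 // => w /negbTE ->.
    by rewrite scale0r.
- move=> a ha j.
  have := fB j; rewrite in_setD1 => /andP [fjvs fjA].
  have [x heq] := sub_addsmxP (Hsub _ fjA).
  have [p [P1 P2 P3]] := p_exists hGc GL (AL _ vsA) (AL _ fjA) heq.
  have := Lden1 l0 D0 hT P1 P2 ha.
  rewrite ev_sum coef_sum.
  under eq_bigr => i _ do rewrite evZ evX coefCM coefCM coefX /= mulr1.
  rewrite (bigD1 j) //= big1 ?addr0.
    rewrite P3 ?eqxx ?mulr1 //.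
    by apply/negP => /Gni; rewrite Aint.
  move=> i ij; have := fB i; rewrite in_setD1 => /andP [fivs fiA].
  rewrite P3 //; last by apply/negP => /Gni; rewrite Aint.
  by rewrite (inj_eq finj) (negbTE ij) mulr0.
Qed.
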